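(* For all $0\le\varepsilon\le x\le1$ with $x>0$, $\Delta(\varepsilon)\le \frac{\Delta(x)}{x}\,\varepsilon$. In particular $\Delta(\varepsilon)\le\varepsilon$ for all $0\le\varepsilon\le1$.
   Context: Let $\lambda$ denote Lebesgue measure on $\mathbb{R}$. A set $C\subseteq\mathbb{R}$ is symmetric if there is a number $c$ such that $c+x\in C$ if and only if $c-x\in C$. For a measurable $A\subseteq\mathbb{R}$ let $D(A):=\sup\{\lambda(C): C\subseteq A,\ C \text{ measurable and symmetric}\}$. For $0\le\varepsilon\le1$ let $\Delta(\varepsilon):=\inf\{D(A): A\subseteq[0,1) \text{ measurable},\ \lambda(A)=\varepsilon\}$. *)

(* Defs.v *)
From mathcomp Require Import all_boot all_order all_algebra.
From mathcomp Require Import all_classical all_reals all_analysis.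
Set Implicit Arguments. Unset Strict Implicit. Unset Printing Implicit Defensive.
Import Order.TTheory GRing.Theory Num.Theory.
Local Open Scope classical_set_scope.
Local Open Scope ring_scope.

(* The real line equipped with the sigma-algebra of Lebesgue-measurable
   (Caratheodory-measurable) sets, i.e. the domain of the completed
   Lebesgue measure. *)
Definition lebT (R : realType) : Type :=
  caratheodory_type (R := R) (wlength (@idfun R))^*%mu.

Definition leb {R : realType} : set (lebT R) -> \bar R :=
  @completed_lebesgue_measure R.

Definition symmetric_set {R : realType} (C : set R) : Prop :=
  exists c : R, forall x : R, C (c + x) <-> C (c - x).

Definition Dsym {R : realType} (A : set (lebT R)) : \bar R :=
  ereal_sup [set leb C | C in [set C : set (lebT R) |
     C `<=` A /\ measurable C /\ symmetric_set (C : set R)]].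

Definition Delta {R : realType} (eps : R) : \bar R :=
  ereal_inf [set Dsym A | A in [set A : set (lebT R) |
     A `<=` `[0, 1[%classic /\ measurable A /\ leb A = eps%:E]].

(* Main.v *)
Require Import Defs.
From mathcomp Require Import all_boot all_order all_algebra.
From mathcomp Require Import all_classical all_reals all_analysis.
Import Order.TTheory GRing.Theory Num.Theory.
Local Open Scope classical_set_scope.
Local Open Scope ring_scope.
Local Open Scope ereal_scope.

Section S.
Variable R : realType.
Notation mu := (@wlength R idfun).
Lemma lebE (A : set (lebT R)) : leb A = (mu^*)%mu A.
Proof. reflexivity. Qed.
Lemma lebL (A : set (lebT R)) : leb A = lebesgue_measure (A : set R).
Proof. reflexivity. Qed.

Definition sc (t : R) (A : set R) : set R := [set y : R | A (y / t)%R].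

Lemma scK (t : R) (A : set R) : (0 < t)%R -> sc t^-1 (sc t A) = A.
Proof.
by move=> t0; apply/seteqP; split => z; rewrite /sc /= invrK mulfK ?gt_eqF.
Qed.

Lemma scKV (t : R) (A : set R) : (0 < t)%R -> sc t (sc t^-1 A) = A.
Proof.
by move=> t0; apply/seteqP; split => z; rewrite /sc /= invrK mulfVK ?gt_eqF.
Qed.

Lemma sc_oc (t a b : R) : (0 < t)%R -> sc t `]a, b]%classic = `](t * a)%R, (t * b)%R]%classic.
Proof.
move=> t0; apply/seteqP; split => z; rewrite /sc /= !in_itv /=.
  by rewrite ltr_pdivlMr // ler_pdivrMr // ![(_ * t)%R]mulrC.
by rewrite ltr_pdivlMr // ler_pdivrMr // ![(_ * t)%R]mulrC.
Qed.

Lemma mu_sc_oc (t a b : R) : (0 < t)%R ->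
  mu (sc t `]a, b]%classic) = t%:E * mu `]a, b]%classic.
Proof.
move=> t0; rewrite sc_oc //.
have [ab|ba] := leP a b.
  rewrite !wlength_itv_bnd ?ler_pM2l //= -EFinM; congr EFin.
  by rewrite mulrBr.
rewrite !set_itv_ge ?wlength0 ?mule0 //= -leNgt bnd_simp ?ler_pM2l //; exact/ltW.
Qed.


Lemma sc_meas (t : R) (F : set (ocitv_type R)) : (0 < t)%R ->
  measurable F -> measurable (sc t F : set (ocitv_type R)).
Proof.
move=> t0 [[a b] _ <-]; exists (t * a, t * b)%R => //=.
by rewrite sc_oc.
Qed.

Lemma mu_sc_meas (t : R) (F : set (ocitv_type R)) : (0 < t)%R ->
  measurable F -> mu (sc t F) = t%:E * mu F.
Proof. by move=> t0 [[a b] _ <-]; rewrite mu_sc_oc. Qed.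

Lemma mu_ext_sc_le (t : R) (X : set (ocitv_type R)) : (0 < t)%R ->
  (mu^*)%mu (sc t X) <= t%:E * (mu^*)%mu X.
Proof.
move=> t0; rewrite /mu_ext -lee_pdivrMl//.
apply: le_ereal_inf_tmp => _ [F [mF XF] <-]; rewrite lee_pdivrMl//.
apply: ereal_inf_lbound; exists (fun k => sc t (F k)).
  split; first by move=> k; exact: sc_meas.
  by move=> z /= /XF [k _ Fk]; exists k.
rewrite /= -nneseriesZl; last by move=> i _; exact: wlength_ge0.
by apply: eq_eseriesr => k _; rewrite mu_sc_meas.
Qed.

Lemma mu_ext_sc (t : R) (X : set (ocitv_type R)) : (0 < t)%R ->
  (mu^*)%mu (sc t X) = t%:E * (mu^*)%mu X.
Proof.
move=> t0; apply/eqP; rewrite eq_le mu_ext_sc_le //=.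
rewrite -lee_pdivlMl //.
have ti0 : (0 < t^-1)%R by rewrite invr_gt0.
have := @mu_ext_sc_le t^-1 (sc t X) ti0.
by rewrite scK.
Qed.


Lemma cara_sc (t : R) (A : set (lebT R)) : (0 < t)%R ->
  measurable A -> measurable (sc t A : set (lebT R)).
Proof.
move=> t0 mA; apply: le_caratheodory_measurable => X.
suff H : forall Y : set R, (mu^*)%mu (sc t Y `&` sc t A) + (mu^*)%mu (sc t Y `&` ~` sc t A)
  <= (mu^*)%mu (sc t Y).
  by have := H (sc t^-1 X); rewrite scKV.
move=> Y.
change ((mu^*)%mu (sc t (Y `&` A)) + (mu^*)%mu (sc t (Y `&` ~` A))
  <= (mu^*)%mu (sc t Y)).
rewrite !mu_ext_sc // -ge0_muleDr; [|exact: mu_ext_ge0|exact: mu_ext_ge0].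
by rewrite -(mA Y).
Qed.

Lemma sym_sc (t : R) (C : set R) : (0 < t)%R ->
  symmetric_set C -> symmetric_set (sc t C).
Proof.
move=> t0 [c Hc]; exists (c * t)%R => x; rewrite /sc /=.
by rewrite mulrDl mulrBl mulfK ?gt_eqF.
Qed.

Lemma Dsym_sc (t : R) (A : set (lebT R)) : (0 < t)%R ->
  Dsym (sc t A : set (lebT R)) <= t%:E * Dsym A.
Proof.
move=> t0; apply: ge_ereal_sup; rewrite /ubound /= => y [C [CsA [mC sC]] <-].
have ti0 : (0 < t^-1)%R by rewrite invr_gt0.
rewrite -(@scKV t C t0).
change (leb (sc t (sc t^-1 C) : set (lebT R)) <= t%:E * Dsym A).
rewrite lebE mu_ext_sc //; apply: lee_wpmul2l; first by rewrite lee_fin ltW.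
apply: ereal_sup_ubound; exists (sc t^-1 C : set (lebT R)) => //.
split; first by move=> z /= /CsA; rewrite /sc /= invrK mulfK ?gt_eqF.
split; first exact: cara_sc.
exact: sym_sc.
Qed.


Lemma Dsym_le (A : set (lebT R)) : Dsym A <= leb A.
Proof.
apply: ge_ereal_sup; rewrite /ubound /= => y [C [CA _] <-].
rewrite !lebE; exact: le_mu_ext.
Qed.

Lemma Delta0 : Delta (0 : R) <= 0.
Proof.
apply: (@le_trans _ _ (Dsym (set0 : set (lebT R)))).
  apply: ereal_inf_lbound; exists set0 => //; split; first by [].
  by split; [exact: measurable0 | exact: measure0].
apply: (le_trans (Dsym_le _)).
by rewrite le_eqVlt; apply/orP; left; apply/eqP; exact: measure0.
Qed.

Lemma itv_meas (eps : R) : measurable (`[0%R, eps[%classic : set (lebT R)).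
Proof.
apply: (@sub_caratheodory _ _ R mu).
exact: (@measurable_itv R).
Qed.

Lemma itv_leb (eps : R) : (0 <= eps)%R -> leb (`[0%R, eps[%classic : set (lebT R)) = eps%:E.
Proof.
move=> e0; rewrite lebL lebesgue_measure_itv /= lte_fin.
move: e0; rewrite le_eqVlt => /predU1P[<-|->]; first by rewrite ltxx.
by rewrite oppr0 adde0.
Qed.

End S.
Arguments sc {R}.

Theorem lemma2p3 (R : realType) :
  (forall eps x : R, (0 <= eps)%R -> (eps <= x)%R -> (x <= 1)%R -> (0 < x)%R ->
     Delta eps <= Delta x * (eps / x)%:E) /\
  (forall eps : R, (0 <= eps)%R -> (eps <= 1)%R -> Delta eps <= eps%:E).
Proof.
split.
  move=> eps x e0 ex x1 x0.
  move: e0; rewrite le_eqVlt => /predU1P[<-|ep].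
    by rewrite mul0r mule0; exact: Delta0.
  set t := (eps / x)%R.
  have t0 : (0 < t)%R by rewrite divr_gt0.
  have t1 : (t <= 1)%R by rewrite ler_pdivrMr // mul1r.
  rewrite muleC -lee_pdivrMl//; apply: le_ereal_inf_tmp.
  rewrite /lbound /= => _ [A [As [mA lA]] <-]; rewrite lee_pdivrMl//.
  apply: le_trans (@Dsym_sc R t A t0).
  apply: ereal_inf_lbound; exists (sc t A : set (lebT R)) => //.
  split.
    move=> z /= /As; rewrite /= !in_itv /= => /andP[h1 h2].
    apply/andP; split.
      by move: h1; rewrite ler_pdivlMr // mul0r.
    by move: h2; rewrite ltr_pdivrMr // mul1r => /lt_le_trans; apply.
  split; first exact: cara_sc.
  rewrite lebE mu_ext_sc // -lebE lA -EFinM /t divfK //.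
  by rewrite gt_eqF.
move=> eps e0 e1.
apply: (@le_trans _ _ (Dsym (`[0%R, eps[%classic : set (lebT R)))).
  apply: ereal_inf_lbound; exists (`[0%R, eps[%classic : set (lebT R)) => //.
  split.
    move=> z /=; rewrite !in_itv /= => /andP[h1 h2].
    by rewrite h1 /= (lt_le_trans h2 e1).
  by split; [exact: itv_meas | exact: itv_leb].
by rewrite -(@itv_leb R eps e0); exact: Dsym_le.
Qed.
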